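(* Let $\mathcal R$ be a left-linear TRS which is terminating modulo $\mathcal B$. Then $\mathcal R$ is Church–Rosser modulo $\mathcal B$ if and only if $\mathrm{PCP}(\mathcal R)\cup\mathrm{PCP}^\pm(\mathcal R,\mathcal B^\pm)\subseteq\ \downarrow^\sim_{\mathcal R}$.
   Context: Terms are built from a signature $\mathcal F$ and variables $\mathcal V$. A rule $\ell\to r$ is a pair of terms with $\ell\notin\mathcal V$ and $\mathrm{Var}(r)\subseteq\mathrm{Var}(\ell)$; a TRS is a set of rules, an ES a set of equations; a TRS is left-linear if no left-hand side contains a variable twice. For a set $\mathcal E$ of pairs of terms, $s\to_{\mathcal E}t$ iff $s|_p=\ell\sigma$ and $t=s[r\sigma]_p$ for some $(\ell,r)\in\mathcal E$, position $p$ and substitution $\sigma$; $\leftarrow_{\mathcal E}$ is its inverse. $\mathcal B$ is a fixed ES with $\mathrm{Var}(\ell)=\mathrm{Var}(r)$ for all $\ell\approx r\in\mathcal B$; $\sim_{\mathcal B}=\leftrightarrow^*_{\mathcal B}$ and $\mathcal B^\pm=\mathcal B\cup\{t\approx s\mid s\approx t\in\mathcal B\}$. For a TRS $\mathcal R$: $\to_{\mathcal R/\mathcal B}=\sim_{\mathcal B}\cdot\to_{\mathcal R}\cdot\sim_{\mathcal B}$; $s\downarrow^\sim_{\mathcal R}t$ iff $s\to^*_{\mathcal R}\cdot\sim_{\mathcal B}\cdot\leftarrow^*_{\mathcal R}t$. $\mathcal R$ is terminating modulo $\mathcal B$ if there is no infinite $\to_{\mathcal R/\mathcal B}$-sequence,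 and Church–Rosser modulo $\mathcal B$ if $\leftrightarrow^*_{\mathcal R\cup\mathcal B}\subseteq\ \downarrow^\sim_{\mathcal R}$. Critical pairs: for sets of oriented pairs $\mathcal R_1,\mathcal R_2$ (equations of $\mathcal B^\pm$ read as oriented pairs), an overlap is $\langle\ell_1\to r_1,p,\ell_2\to r_2\rangle$ with $\ell_i\to r_i$ variants of elements of $\mathcal R_i$ without common variables, $p$ a non-variable position of $\ell_2$, $\ell_1$ and $\ell_2|_p$ unifiable, and the two rules not variants of each other if $p=\epsilon$. With an mgu $\sigma$ this yields the critical peak $\ell_2\sigma[r_1\sigma]_p\leftarrow^p\ell_2\sigma\to^\epsilon r_2\sigma$ and critical pair $\ell_2\sigma[r_1\sigma]_p\approx r_2\sigma$. A critical peak $t\leftarrow^p s\to^\epsilon u$ is prime if all proper subterms of $s|_p$ are normal forms of $\to_{\mathcal R}$ (irreducibility is always checked w.r.t. $\mathcal R$, also for overlaps involving $\mathcal B^\pm$). $\mathrm{PCP}(\mathcal R)$ is the set of prime critical pairs from overlaps of $\mathcal R$ with itself; $\mathrm{PCP}^\pm(\mathcal R,\mathcal B^\pm)$ is the set of prime critical pairs from overlaps $\langle\rho_1,p,\rho_2\rangle$ with $\rho_1\in\mathcal R,\rho_2\in\mathcal B^\pm$ or $\rho_1\in\mathcal B^\pm,\rho_2\in\mathcal R$. The inclusion of a set of equations in a relation means each $s\approx t$ in the set satisfies $s\downarrow^\sim_{\mathcal R}t$. *)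

(* Defs.v *)
From Stdlib Require Import List Relations.
Import ListNotations.

Set Implicit Arguments.

Section TRS.
Variable F : Type.

Inductive term : Type :=
| Var : nat -> term
| Fun : F -> list term -> term.

Fixpoint subst (sigma : nat -> term) (t : term) : term :=
  match t with
  | Var x => sigma x
  | Fun f ts => Fun f (map (subst sigma) ts)
  end.

Fixpoint vars (t : term) : list nat :=
  match t with
  | Var x => [x]
  | Fun f ts => concat (map vars ts)
  end.

(* repl s p a b t : s|_p = a and t = s[b]_p *)
Inductive repl : term -> list nat -> term -> term -> term -> Prop :=
| repl_here : forall a b, repl a [] a b b
| repl_arg : forall f ls a0 rs p a b t',
    repl a0 p a b t' ->
    repl (Fun f (ls ++ a0 :: rs)) (length ls :: p) a b (Fun f (ls ++ t' :: rs)).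

Definition subterm_at (t : term) (p : list nat) (a : term) : Prop :=
  exists b t', repl t p a b t'.

Definition is_var (t : term) : Prop := exists x, t = Var x.

Definition rules := term * term -> Prop.

Definition step (E : rules) (s t : term) : Prop :=
  exists l r p sigma, E (l, r) /\ repl s p (subst sigma l) (subst sigma r) t.

Definition is_TRS (R : rules) : Prop :=
  forall l r, R (l, r) -> ~ is_var l /\ incl (vars r) (vars l).

Definition left_linear (R : rules) : Prop :=
  forall l r, R (l, r) -> NoDup (vars l).

Definition B_ok (B : rules) : Prop :=
  forall l r, B (l, r) -> incl (vars l) (vars r) /\ incl (vars r) (vars l).

Definition Bpm (B : rules) : rules := fun e => B e \/ B (snd e, fst e).

Definition union (E1 E2 : rules) : rules := fun e => E1 e \/ E2 e.

Definition simB (B : rules) : relation term := clos_refl_sym_trans term (step B).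

Definition step_mod (R B : rules) (s t : term) : Prop :=
  exists s' t', simB B s s' /\ step R s' t' /\ simB B t' t.

Definition terminating_modulo (R B : rules) : Prop :=
  ~ exists f : nat -> term, forall n, step_mod R B (f n) (f (S n)).

Definition joinable_mod (R B : rules) (s t : term) : Prop :=
  exists u v, clos_refl_trans term (step R) s u /\ simB B u v /\
              clos_refl_trans term (step R) t v.

Definition CR_modulo (R B : rules) : Prop :=
  forall s t, clos_refl_sym_trans term (step (union R B)) s t -> joinable_mod R B s t.

Definition renaming (pi : nat -> nat) : Prop :=
  (forall x y, pi x = pi y -> x = y) /\ (forall y, exists x, pi x = y).

Definition variant (rho rho' : term * term) : Prop :=
  exists pi, renaming pi /\
    fst rho' = subst (fun x => Var (pi x)) (fst rho) /\
    snd rho' = subst (fun x => Var (pi x)) (snd rho).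

Definition variant_of (E : rules) (rho' : term * term) : Prop :=
  exists rho, E rho /\ variant rho rho'.

Definition rule_vars (rho : term * term) : list nat := vars (fst rho) ++ vars (snd rho).

Definition unifier (sigma : nat -> term) (s t : term) : Prop := subst sigma s = subst sigma t.

Definition mgu (sigma : nat -> term) (s t : term) : Prop :=
  unifier sigma s t /\
  forall tau, unifier tau s t -> exists delta, forall x, tau x = subst delta (sigma x).

Definition normal_form (R : rules) (t : term) : Prop := ~ exists u, step R t u.

(* t ≈ u is a prime critical pair from overlaps <rho1, p, rho2> with rho1 a variant of
   an element of R1 and rho2 a variant of an element of R2; primality w.r.t. R. *)
Definition prime_cp (R R1 R2 : rules) (t u : term) : Prop :=
  exists l1 r1 l2 r2 p a sigma s,
    variant_of R1 (l1, r1) /\ variant_of R2 (l2, r2) /\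
    (forall x, In x (rule_vars (l1, r1)) -> ~ In x (rule_vars (l2, r2))) /\
    subterm_at l2 p a /\ ~ is_var a /\
    ~ (p = [] /\ variant (l1, r1) (l2, r2)) /\
    mgu sigma l1 a /\
    s = subst sigma l2 /\
    repl s p (subst sigma l1) (subst sigma r1) t /\
    u = subst sigma r2 /\
    (forall q v, q <> [] -> subterm_at (subst sigma l1) q v -> normal_form R v).

Definition PCP (R : rules) (t u : term) : Prop := prime_cp R R R t u.

Definition PCPpm (R B : rules) (t u : term) : Prop :=
  prime_cp R R (Bpm B) t u \/ prime_cp R (Bpm B) R t u.

End TRS.

Arguments Var {F} _.

(* Main.v *)
Require Import Defs.
From Stdlib Require Import List Relations Arith Lia Wellfounded Classical ClassicalEpsilon.
Import ListNotations.
Set Implicit Arguments.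

Section Main.
Variable F : Type.
Notation term := (term F).
Implicit Types (s t u a b c d l r w v A B X Y : term) (ts us ls rs : list term).

Section TI.
Variable P : term -> Prop.
Hypothesis HV : forall x, P (Var x).
Hypothesis HF : forall f ts, Forall P ts -> P (Fun f ts).
Fixpoint term_ind' (t : term) : P t :=
  match t with
  | Var x => @HV x
  | Fun f ts => @HF f ts ((fix go (l : list term) : Forall P l :=
        match l with [] => Forall_nil _ | a :: l' => Forall_cons _ (term_ind' a) (go l') end) ts)
  end.
End TI.

Fixpoint size (t : term) : nat :=
  match t with Var _ => 1 | Fun _ ts => S (list_sum (map size ts)) end.

Lemma subst_comp : forall t (s th : nat -> term),
  subst th (subst s t) = subst (fun x => subst th (s x)) t.
Proof.
  intro t; induction t as [x|f ts IH] using term_ind'; intros; simpl; auto.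
  f_equal. rewrite map_map. apply map_ext_in. intros a Ha.
  rewrite Forall_forall in IH. apply IH; auto.
Qed.

Lemma subst_ext_in : forall t (s s' : nat -> term),
  (forall x, In x (vars t) -> s x = s' x) -> subst s t = subst s' t.
Proof.
  intro t; induction t as [x|f ts IH] using term_ind'; intros s s' H; simpl in *.
  - apply H; auto.
  - f_equal. apply map_ext_in. intros a Ha.
    rewrite Forall_forall in IH. apply IH; auto. intros x Hx. apply H.
    apply in_concat. exists (vars a). split; auto. apply in_map; auto.
Qed.

Lemma map_eq_in : forall (A0 B0 : Type) (f g : A0 -> B0) (l : list A0) (a : A0), map f l = map g l -> In a l -> f a = g a.
Proof.
  intros A0 B0 f g l; induction l as [|b l IH]; simpl; intros a H Ha. destruct Ha.
  injection H as H1 H2. destruct Ha as [<-|Ha]; auto.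
Qed.

Lemma subst_ext_inv : forall t (s s' : nat -> term),
  subst s t = subst s' t -> forall x, In x (vars t) -> s x = s' x.
Proof.
  intro t; induction t as [x|f ts IH] using term_ind'; intros s s' H y Hy; simpl in *.
  - destruct Hy as [<-|[]]; auto.
  - injection H as H. apply in_concat in Hy. destruct Hy as [vs [Hvs Hy]].
    apply in_map_iff in Hvs. destruct Hvs as [a [<- Ha]].
    rewrite Forall_forall in IH. apply (IH a Ha s s'); auto.
    eapply map_eq_in; eauto.
Qed.

Lemma subst_Var : forall t : term, subst Var t = t.
Proof.
  intro t; induction t as [x|f ts IH] using term_ind'; simpl; auto.
  f_equal. rewrite Forall_forall in IH. induction ts as [|a ts IHt]; simpl; auto. f_equal; simpl in *; auto.
Qed.

Lemma vars_subst : forall t (s : nat -> term) y,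
  In y (vars (subst s t)) <-> exists x, In x (vars t) /\ In y (vars (s x)).
Proof.
  intro t; induction t as [x|f ts IH] using term_ind'; intros s y; simpl.
  - split. intro H; exists x; auto. intros [z [[<-|[]] H]]; auto.
  - rewrite Forall_forall in IH. rewrite map_map. split.
    + intro H. apply in_concat in H. destruct H as [vs [Hvs Hy]].
      apply in_map_iff in Hvs. destruct Hvs as [a [<- Ha]].
      apply IH in Hy; auto. destruct Hy as [z [Hz Hy]]. exists z; split; auto.
      apply in_concat. exists (vars a); split; auto. apply in_map; auto.
    + intros [z [Hz Hy]]. apply in_concat in Hz. destruct Hz as [vs [Hvs Hz]].
      apply in_map_iff in Hvs. destruct Hvs as [a [<- Ha]].
      apply in_concat. exists (vars (subst s a)). split. apply in_map_iff; eauto.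
      apply IH; eauto.
Qed.

Lemma in_vars_fun : forall f ts (a : term) x, In a ts -> In x (vars a) -> In x (vars (Fun f ts)).
Proof.
  intros. simpl. apply in_concat. exists (vars a). split; auto. apply in_map; auto.
Qed.

Lemma app_cons_len : forall (T : Type) (ls ls' rs rs' : list T) (a a' : T),
  ls ++ a :: rs = ls' ++ a' :: rs' -> length ls = length ls' -> ls = ls' /\ a = a' /\ rs = rs'.
Proof.
  intros T ls; induction ls as [|b ls IH]; intros [|b' ls'] rs rs' a a' H L; simpl in *;
    try discriminate.
  - injection H; auto.
  - injection H as -> H. injection L as L. destruct (IH _ _ _ _ _ H L) as [-> [-> ->]]. auto.
Qed.

Lemma app_split_lt : forall (T : Type) (ls ls' rs rs' : list T) (a a' : T),
  ls ++ a :: rs = ls' ++ a' :: rs' -> length ls < length ls' ->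
  exists ms, ls' = ls ++ a :: ms /\ rs = ms ++ a' :: rs'.
Proof.
  intros T ls; induction ls as [|b ls IH]; intros [|b' ls'] rs rs' a a' H L; simpl in *;
    try lia.
  - injection H as -> ->. exists ls'; auto.
  - injection H as -> H. destruct (IH _ _ _ _ _ H) as [ms [-> ->]]. lia. exists ms; auto.
Qed.

Lemma repl_inv_cons : forall s i p a b t, repl s (i :: p) a b t ->
  exists f ls a0 rs t0, s = Fun f (ls ++ a0 :: rs) /\ i = length ls /\ repl a0 p a b t0 /\
    t = Fun f (ls ++ t0 :: rs).
Proof.
  intros s i p a b t H. inversion H; subst. do 5 eexists; eauto.
Qed.

Lemma repl_inv_nil : forall s a b t, repl s [] a b t -> s = a /\ t = b.
Proof. intros s a b t H. inversion H; auto. Qed.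

Lemma repl_det : forall p s a b t, repl s p a b t ->
  forall a' b' t', repl s p a' b' t' -> a = a' /\ (b = b' -> t = t').
Proof.
  intro p; induction p as [|i p IH]; intros s a b t H a' b' t'' H'.
  - apply repl_inv_nil in H; apply repl_inv_nil in H'. destruct H, H'; subst; auto.
  - apply repl_inv_cons in H. apply repl_inv_cons in H'.
    destruct H as [f [ls [a0 [rs [t0 [-> [-> [H ->]]]]]]]].
    destruct H' as [f' [ls' [a0' [rs' [t0' [E [L [H' ->]]]]]]]].
    injection E as -> E. destruct (app_cons_len _ _ _ _ _ _ E L) as [-> [-> ->]].
    destruct (IH _ _ _ _ H _ _ _ H') as [-> E']. split; auto. intros ->. rewrite E'; auto.
Qed.

Lemma repl_exists : forall s p a b t, repl s p a b t -> forall b', exists t', repl s p a b' t'.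
Proof.
  intros s p a b t H; induction H; intros b'.
  - eexists; constructor.
  - destruct (IHrepl b') as [t0 H0]. eexists; constructor; eauto.
Qed.

Lemma repl_app : forall s p A B t, repl s p A B t ->
  forall q c d, repl A q c d B -> repl s (p ++ q) c d t.
Proof.
  intros s p A B t H; induction H; intros q c d H'; simpl; auto.
  constructor; auto.
Qed.

Lemma repl_app_inv : forall p q s c d t, repl s (p ++ q) c d t ->
  exists A B, repl s p A B t /\ repl A q c d B.
Proof.
  intro p; induction p as [|i p IH]; intros q s c d t H; simpl in *.
  - exists s, t; split; auto. constructor.
  - apply repl_inv_cons in H. destruct H as [f [ls [a0 [rs [t0 [-> [-> [H ->]]]]]]]].
    destruct (IH _ _ _ _ _ H) as [A [B [H1 H2]]].
    exists A, B; split; auto. constructor; auto.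
Qed.

Lemma repl_subst : forall s p a b t, repl s p a b t -> forall sg,
  repl (subst sg s) p (subst sg a) (subst sg b) (subst sg t).
Proof.
  intros s p a b t H; induction H; intro sg; simpl.
  - constructor.
  - rewrite !map_app. simpl. rewrite <- (length_map (subst sg) ls). constructor; auto.
Qed.

Lemma repl_trans : forall p s a b t, repl s p a b t -> forall c t', repl s p a c t' -> repl t p b c t'.
Proof.
  intro p; induction p as [|i p IH]; intros s a b t H c t'' H'.
  - apply repl_inv_nil in H; apply repl_inv_nil in H'. destruct H, H'; subst; constructor.
  - apply repl_inv_cons in H. apply repl_inv_cons in H'.
    destruct H as [f [ls [a0 [rs [t0 [-> [-> [H ->]]]]]]]].
    destruct H' as [f' [ls' [a0' [rs' [t0' [E [L [H' ->]]]]]]]].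
    injection E as -> E. destruct (app_cons_len _ _ _ _ _ _ E L) as [-> [-> ->]].
    constructor; eauto.
Qed.

Lemma repl_refl : forall s p a b t, repl s p a b t -> repl s p a a s.
Proof. intros s p a b t H; induction H; constructor; auto. Qed.

Lemma repl_sym : forall s p a b t, repl s p a b t -> repl t p b a s.
Proof. intros. eapply repl_trans; eauto. eapply repl_refl; eauto. Qed.

Lemma positions : forall s P a1 b1 t, repl s P a1 b1 t ->
  forall Q a2 b2 u, repl s Q a2 b2 u ->
  (exists q, Q = P ++ q) \/ (exists q, P = Q ++ q) \/
  (exists w, repl t Q a2 b2 w /\ repl u P a1 b1 w).
Proof.
  intros s P a1 b1 t H; induction H as [|f ls a0 rs p a1 b1 t' H IH]; intros Q a2 b2 u H'.
  - left. exists Q; auto.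
  - destruct Q as [|j Q].
    + right; left. exists (length ls :: p); auto.
    + apply repl_inv_cons in H'.
      destruct H' as [f' [ls' [a0' [rs' [t0' [E [L [H' ->]]]]]]]].
      injection E as <- E. subst j.
      destruct (lt_eq_lt_dec (length ls) (length ls')) as [[L|L]|L].
      * destruct (app_split_lt _ _ _ _ _ _ E L) as [ms [-> ->]].
        right; right. exists (Fun f (ls ++ t' :: ms ++ t0' :: rs')). split.
        -- replace (ls ++ t' :: ms ++ a0' :: rs') with ((ls ++ t' :: ms) ++ a0' :: rs')
             by (rewrite <- app_assoc; auto).
           replace (ls ++ t' :: ms ++ t0' :: rs') with ((ls ++ t' :: ms) ++ t0' :: rs')
             by (rewrite <- app_assoc; auto).
           replace (length (ls ++ a0 :: ms)) with (length (ls ++ t' :: ms))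
             by (rewrite !length_app; auto).
           constructor; auto.
        -- rewrite <- app_assoc. simpl. constructor; auto.
      * destruct (app_cons_len _ _ _ _ _ _ E L) as [<- [<- <-]].
        destruct (IH _ _ _ _ H') as [[q ->]|[[q ->]|[w [W1 W2]]]].
        -- left. exists q; auto.
        -- right; left. exists q; auto.
        -- right; right. exists (Fun f (ls ++ w :: rs)). split; constructor; auto.
      * symmetry in E. destruct (app_split_lt _ _ _ _ _ _ E L) as [ms [-> ->]].
        right; right. exists (Fun f (ls' ++ t0' :: ms ++ t' :: rs)). split.
        -- rewrite <- app_assoc. simpl. constructor; auto.
        -- replace (ls' ++ t0' :: ms ++ a0 :: rs) with ((ls' ++ t0' :: ms) ++ a0 :: rs)
             by (rewrite <- app_assoc; auto).
           replace (ls' ++ t0' :: ms ++ t' :: rs) with ((ls' ++ t0' :: ms) ++ t' :: rs)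
             by (rewrite <- app_assoc; auto).
           replace (length (ls' ++ a0' :: ms)) with (length (ls' ++ t0' :: ms))
             by (rewrite !length_app; auto).
           constructor; auto.
Qed.


Lemma in_size_sum : forall x ts, In x ts -> size x <= list_sum (map size ts).
Proof.
  intros x ts; induction ts as [|a ts IH]; simpl; intros H. destruct H.
  destruct H as [->|H]. lia. specialize (IH H). lia.
Qed.

Lemma repl_size : forall s q a b t, repl s q a b t -> size a <= size s /\ (q <> [] -> size a < size s).
Proof.
  intros s q a b t H; induction H. split; auto. intros []; auto.
  simpl. assert (size a0 <= list_sum (map size (ls ++ a0 :: rs))).
  { apply in_size_sum. apply in_or_app; simpl; auto. }
  destruct IHrepl. split; [lia|]. intros _. lia.
Qed.

Lemma subterm_size : forall s q a, subterm_at s q a -> size a <= size s.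
Proof. intros s q a [b [t H]]. apply (repl_size H). Qed.

Lemma subterm_size_lt : forall s q a, subterm_at s q a -> q <> [] -> size a < size s.
Proof. intros s q a [b [t H]]. apply (repl_size H). Qed.

Lemma subterm_refl : forall s, subterm_at s [] s.
Proof. intros s. exists s, s. constructor. Qed.

Lemma repl_vars : forall s q a b t, repl s q a b t -> incl (vars a) (vars s).
Proof.
  intros s q a b t H; induction H. apply incl_refl.
  intros x Hx. apply IHrepl in Hx. eapply in_vars_fun; eauto. apply in_or_app; simpl; auto.
Qed.

Lemma subterm_vars : forall s q a, subterm_at s q a -> incl (vars a) (vars s).
Proof. intros s q a [b [t H]]. eapply repl_vars; eauto. Qed.

Lemma subterm_compose : forall s q a q' v, subterm_at s q a -> subterm_at a q' v -> subterm_at s (q ++ q') v.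
Proof.
  intros s q a q' v [b [t H]] [c [d H']]. destruct (repl_exists H d) as [t' H1].
  exists c, t'. eapply repl_app; eauto.
Qed.

Lemma subterm_subst : forall s q v sg, subterm_at s q v -> subterm_at (subst sg s) q (subst sg v).
Proof. intros s q v sg [b [t H]]. do 2 eexists. apply repl_subst; eauto. Qed.

Section Steps.
Variable E : rules F.
Notation rt := (clos_refl_trans term (step E)).
Notation rst := (clos_refl_sym_trans term (step E)).

Lemma step_ctx : forall a b s p t, step E a b -> repl s p a b t -> step E s t.
Proof.
  intros a b s p t [l [r [p' [sg [HE Hr]]]]] H. exists l, r, (p ++ p'), sg. split; auto.
  eapply repl_app; eauto.
Qed.

Lemma step_root : forall l r sg, E (l, r) -> step E (subst sg l) (subst sg r).
Proof. intros. exists l, r, [], sg. split; auto. constructor. Qed.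

Lemma step_subst : forall a b th, step E a b -> step E (subst th a) (subst th b).
Proof.
  intros a b th [l [r [p [sg [HE Hr]]]]]. exists l, r, p, (fun x => subst th (sg x)).
  split; auto. rewrite <- !subst_comp. apply repl_subst; auto.
Qed.

Lemma rt_ctx : forall a b, rt a b -> forall s p t, repl s p a b t -> rt s t.
Proof.
  intros a b H; induction H as [a b H|a|a b c H1 IH1 H2 IH2]; intros s p t Hr.
  - apply rt_step. eapply step_ctx; eauto.
  - destruct (repl_det Hr (repl_refl Hr)) as [_ E']. rewrite E'; auto. apply rt_refl.
  - destruct (repl_exists Hr b) as [t1 Ht1]. eapply rt_trans. eapply IH1; eauto.
    eapply IH2. eapply repl_trans; eauto.
Qed.

Lemma rst_ctx : forall a b, rst a b -> forall s p t, repl s p a b t -> rst s t.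
Proof.
  intros a b H; induction H as [a b H|a|a b H IH|a b c H1 IH1 H2 IH2]; intros s p t Hr.
  - apply rst_step. eapply step_ctx; eauto.
  - destruct (repl_det Hr (repl_refl Hr)) as [_ E']. rewrite E'; auto. apply rst_refl.
  - apply rst_sym. eapply IH. apply repl_sym; eauto.
  - destruct (repl_exists Hr b) as [t1 Ht1]. eapply rst_trans. eapply IH1; eauto.
    eapply IH2. eapply repl_trans; eauto.
Qed.

Lemma rt_subst : forall a b th, rt a b -> rt (subst th a) (subst th b).
Proof.
  intros a b th H; induction H. apply rt_step, step_subst; auto. apply rt_refl. eapply rt_trans; eauto.
Qed.

Lemma rst_subst : forall a b th, rst a b -> rst (subst th a) (subst th b).
Proof.
  intros a b th H; induction H. apply rst_step, step_subst; auto. apply rst_refl.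
  apply rst_sym; auto. eapply rst_trans; eauto.
Qed.

Lemma step_variant : forall l r s p sg t, variant_of E (l, r) ->
  repl s p (subst sg l) (subst sg r) t -> step E s t.
Proof.
  intros l r s p sg t [[l0 r0] [HE [pi [_ [E1 E2]]]]] H. simpl in *.
  exists l0, r0, p, (fun x => sg (pi x)). split; auto.
  subst. rewrite !subst_comp in H. simpl in H. auto.
Qed.

End Steps.

Section Join.
Variables R B : rules F.
Notation rt := (clos_refl_trans term (step R)).
Notation sim := (simB B).
Notation j := (joinable_mod R B).

Lemma j_ctx : forall a b t p u, j a b -> repl t p a b u -> j t u.
Proof.
  intros a b t p u [a' [b' [H1 [H2 H3]]]] Hr.
  destruct (repl_exists Hr a') as [t1 Ht1]. destruct (repl_exists Hr b') as [t2 Ht2].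
  exists t1, t2. split; [|split].
  - exact (rt_ctx H1 Ht1).
  - exact (rst_ctx H2 (repl_trans Ht1 Ht2)).
  - exact (rt_ctx H3 (repl_trans Hr Ht2)).
Qed.

Lemma j_subst : forall a b th, j a b -> j (subst th a) (subst th b).
Proof.
  intros a b th [a' [b' [H1 [H2 H3]]]]. exists (subst th a'), (subst th b').
  split; [|split]; try apply rt_subst; auto. apply rst_subst; auto.
Qed.

Lemma j_sym : forall a b, j a b -> j b a.
Proof. intros a b [a' [b' [H1 [H2 H3]]]]. exists b', a'. split; [|split]; auto. apply rst_sym; auto. Qed.

Lemma j_refl : forall a, j a a.
Proof. intros a. exists a, a. split; [|split]; constructor 2. Qed.

Lemma Bpm_sim : forall a b, step (Bpm B) a b -> sim a b.
Proof.
  intros a b [l [r [p [sg [[H|H] Hr]]]]].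
  - apply rst_step. exists l, r, p, sg; auto.
  - apply rst_sym, rst_step. exists r, l, p, sg. split; auto. apply repl_sym; auto.
Qed.

End Join.


Fixpoint varsE (E : list (term * term)) : list nat :=
  match E with [] => [] | (a, b) :: E' => vars a ++ vars b ++ varsE E' end.
Fixpoint sizeE (E : list (term * term)) : nat :=
  match E with [] => 0 | (a, b) :: E' => size a + size b + sizeE E' end.
Definition nv E := length (nodup Nat.eq_dec (varsE E)).
Definition unifL (sg : nat -> term) (E : list (term * term)) :=
  Forall (fun e => subst sg (fst e) = subst sg (snd e)) E.
Definition mguL sg E := unifL sg E /\
  forall tau, unifL tau E -> exists dl : nat -> term, forall x, tau x = subst dl (sg x).

Lemma size_pos : forall t, 1 <= size t.
Proof. intros [x|f ts]; simpl; lia. Qed.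

Lemma size_var_le : forall t sg x, In x (vars t) -> size (sg x) <= size (subst sg t).
Proof.
  intro t; induction t as [y|f ts IH] using term_ind'; intros sg x H; simpl in *.
  - destruct H as [<-|[]]; auto.
  - apply in_concat in H. destruct H as [vs [Hvs H]]. apply in_map_iff in Hvs.
    destruct Hvs as [a [<- Ha]]. rewrite Forall_forall in IH.
    specialize (IH a Ha sg x H). rewrite map_map.
    assert (size (subst sg a) <= list_sum (map (fun y => size (subst sg y)) ts)).
    { clear -Ha. induction ts as [|b ts IHt]; simpl in *. destruct Ha.
      destruct Ha as [->|Ha]. lia. specialize (IHt Ha). lia. }
    lia.
Qed.

Lemma occurs_lt : forall t sg x, In x (vars t) -> t <> Var x -> size (sg x) < size (subst sg t).
Proof.
  intros [y|f ts] sg x H N; simpl in *.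
  - destruct H as [<-|[]]; congruence.
  - apply in_concat in H. destruct H as [vs [Hvs H]]. apply in_map_iff in Hvs.
    destruct Hvs as [a [<- Ha]].
    pose proof (size_var_le a sg x H). rewrite map_map.
    assert (size (subst sg a) <= list_sum (map (fun y => size (subst sg y)) ts)).
    { clear -Ha. induction ts as [|b ts IHt]; simpl in *. destruct Ha.
      destruct Ha as [->|Ha]. lia. specialize (IHt Ha). lia. }
    lia.
Qed.

Lemma nodup_le : forall (A B : list nat), incl A B -> length (nodup Nat.eq_dec A) <= length (nodup Nat.eq_dec B).
Proof.
  intros A B H. apply NoDup_incl_length. apply NoDup_nodup.
  intros y Hy. apply nodup_In. apply nodup_In in Hy. auto.
Qed.

Lemma nodup_lt : forall (A B : list nat) x, incl A B -> In x B -> ~ In x A ->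
  length (nodup Nat.eq_dec A) < length (nodup Nat.eq_dec B).
Proof.
  intros A B x H Hx Nx.
  assert (length (x :: nodup Nat.eq_dec A) <= length (nodup Nat.eq_dec B)).
  { apply NoDup_incl_length. constructor. rewrite nodup_In; auto. apply NoDup_nodup.
    intros y [<-|Hy]; apply nodup_In; auto. apply nodup_In in Hy. auto. }
  simpl in H0. lia.
Qed.

Lemma varsE_app : forall E1 E2, varsE (E1 ++ E2) = varsE E1 ++ varsE E2.
Proof. induction E1 as [|[a b] E1 IH]; intros; simpl; auto. rewrite IH, !app_assoc; auto. Qed.

Lemma sizeE_app : forall E1 E2, sizeE (E1 ++ E2) = sizeE E1 + sizeE E2.
Proof. induction E1 as [|[a b] E1 IH]; intros; simpl; auto. rewrite IH; lia. Qed.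

Lemma combine_vars : forall ts us y, length ts = length us ->
  (In y (varsE (combine ts us)) <-> In y (concat (map (@vars F) ts)) \/ In y (concat (map (@vars F) us))).
Proof.
  induction ts as [|a ts IH]; intros [|b us] y L; simpl in *; try discriminate.
  - tauto.
  - injection L as L. rewrite !in_app_iff, IH; auto. tauto.
Qed.

Lemma combine_size : forall ts us, length ts = length us ->
  sizeE (combine ts us) = list_sum (map size ts) + list_sum (map size us).
Proof.
  induction ts as [|a ts IH]; intros [|b us] L; simpl in *; try discriminate; auto.
  injection L as L. rewrite IH; auto. lia.
Qed.

Lemma combine_unif : forall ts us sg, length ts = length us ->
  (unifL sg (combine ts us) <-> map (subst sg) ts = map (subst sg) us).
Proof.
  induction ts as [|a ts IH]; intros [|b us] sg L; simpl in *; try discriminate.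
  - split; auto. constructor.
  - injection L as L. unfold unifL in *. rewrite Forall_cons_iff, IH; auto. simpl.
    split. intros [-> ->]; auto. intro H; injection H; auto.
Qed.

Lemma unifL_app : forall sg E1 E2, unifL sg (E1 ++ E2) <-> unifL sg E1 /\ unifL sg E2.
Proof. intros. unfold unifL. apply Forall_app. Qed.

Lemma term_eq_var : forall t x, {t = Var x} + {t <> Var x}.
Proof.
  intros [y|f ts] x. destruct (Nat.eq_dec y x) as [->|N]; [left; auto|right; congruence].
  right; congruence.
Qed.

Definition upd1 x t : nat -> term := fun y => if Nat.eq_dec y x then t else Var y.

Lemma elim_case : forall N x t E, ~ In x (vars t) -> nv ((Var x, t) :: E) <= N ->
  (forall E', nv E' < N -> (exists tau, unifL tau E') -> exists mu, mguL mu E') ->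
  (exists tau, unifL tau ((Var x, t) :: E)) -> exists mu, mguL mu ((Var x, t) :: E).
Proof.
  intros N x t E Nx HN IH [tau Htau].
  set (th := upd1 x t).
  set (E'' := map (fun e => (subst th (fst e), subst th (snd e))) E).
  assert (Hth : forall sg, subst sg (Var x) = subst sg t -> forall y, sg y = subst sg (th y)).
  { intros sg Hs y. unfold th, upd1. destruct (Nat.eq_dec y x) as [->|]; auto. }
  assert (Hcomp : forall sg, subst sg (Var x) = subst sg t -> forall u, subst sg (subst th u) = subst sg u).
  { intros sg Hs u. rewrite subst_comp. apply subst_ext_in. intros y _. symmetry; apply Hth; auto. }
  assert (Hunif : forall sg, unifL sg ((Var x, t) :: E) -> unifL sg E'').
  { intros sg Hs. inversion Hs as [|? ? H1 H2]; subst. simpl in H1.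
    unfold E'', unifL. rewrite Forall_map. eapply Forall_impl; [|exact H2].
    intros [a b]; simpl. rewrite !Hcomp; auto. }
  assert (HvE : forall E0 y, In y (varsE (map (fun e => (subst th (fst e), subst th (snd e))) E0)) ->
            y <> x /\ (In y (vars t) \/ In y (varsE E0))).
  { induction E0 as [|[a b] E0 IHE]; simpl; intros y Hy. destruct Hy.
    assert (G : forall u, In y (vars (subst th u)) -> y <> x /\ (In y (vars t) \/ In y (vars u))).
    { intros u Hu. apply vars_subst in Hu. destruct Hu as [z [Hz Hy']].
      unfold th, upd1 in Hy'. destruct (Nat.eq_dec z x) as [->|Nz].
      - split. intros ->; auto. auto.
      - simpl in Hy'. destruct Hy' as [<-|[]]. auto. }
    rewrite !in_app_iff in Hy |- *. destruct Hy as [Hy|[Hy|Hy]].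
    - destruct (G _ Hy) as [? [?|?]]; auto.
    - destruct (G _ Hy) as [? [?|?]]; auto.
    - destruct (IHE _ Hy) as [? [?|?]]; auto. }
  assert (Hlt : nv E'' < N).
  { eapply Nat.lt_le_trans; [|exact HN]. unfold nv. apply nodup_lt with x.
    - intros y Hy. destruct (HvE E y Hy) as [_ [H|H]]; simpl; rewrite !in_app_iff; auto.
    - simpl; auto.
    - intros Hy. destruct (HvE E x Hy); auto. }
  destruct (IH E'' Hlt) as [mu'' [Hm1 Hm2]]. exists tau; auto.
  exists (fun y => subst mu'' (th y)). split.
  - constructor.
    + simpl. unfold th at 1, upd1. destruct (Nat.eq_dec x x) as [_|]; [|congruence].
      rewrite <- subst_comp. f_equal. rewrite <- (subst_Var t) at 1. apply subst_ext_in.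
      intros y Hy. unfold th, upd1. destruct (Nat.eq_dec y x) as [->|]; auto. contradiction.
    + unfold unifL, E'' in Hm1. rewrite Forall_map in Hm1. eapply Forall_impl; [|exact Hm1].
      intros [a b]; simpl. rewrite !subst_comp. auto.
  - intros sg Hsg. destruct (Hm2 sg (Hunif sg Hsg)) as [d Hd]. exists d. intros y.
    inversion Hsg as [|? ? H1 H2]; subst. simpl in H1.
    rewrite (Hth sg H1 y). rewrite subst_comp.
    apply subst_ext_in. intros z _. auto.
Qed.

Lemma unif_main : forall n m E, nv E <= n -> sizeE E <= m ->
  (exists tau, unifL tau E) -> exists mu, mguL mu E.
Proof.
  intro n; induction n as [n IHn] using (well_founded_induction lt_wf).
  intro m; induction m as [m IHm] using (well_founded_induction lt_wf).
  intros [|[a b] E] Hn Hm Hu.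
  - exists Var. split. constructor. intros tau _. exists tau. auto.
  - assert (IHN : forall E', nv E' < n -> (exists tau, unifL tau E') -> exists mu, mguL mu E').
    { intros E' L. apply (IHn (nv E') ltac:(lia) (sizeE E')); auto. }
    destruct Hu as [tau Hu]. inversion Hu as [|? ? Hab HE]; subst. simpl in Hab.
    assert (Var_case : forall x t, (a = Var x /\ b = t) \/ (a = t /\ b = Var x) -> exists mu, mguL mu ((a, b) :: E)).
    { intros x t Hc.
      assert (Hxt : subst tau (Var x) = subst tau t) by (destruct Hc as [[-> ->]|[-> ->]]; auto).
      destruct (term_eq_var t x) as [->|Ntx].
      -
        assert (Hab' : a = Var x /\ b = Var x) by (destruct Hc as [[-> ->]|[-> ->]]; auto).
        destruct Hab' as [-> ->].
        destruct (IHm (sizeE E)) with (E := E) as [mu [Hm1 Hm2]].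
        + simpl in Hm. pose proof (size_pos (Var x)). simpl in *; lia.
        + eapply Nat.le_trans; [|exact Hn]. apply nodup_le. intros y Hy. simpl. right; right; auto.
        + lia.
        + exists tau; auto.
        + exists mu. split. constructor; auto. intros sg Hsg. apply Hm2.
          inversion Hsg; auto.
      - destruct (in_dec Nat.eq_dec x (vars t)) as [Ix|Nx].
        + exfalso. pose proof (occurs_lt tau Ix Ntx). rewrite <- Hxt in H. simpl in H. lia.
        + assert (Heq : forall sg, unifL sg ((a, b) :: E) <-> unifL sg ((Var x, t) :: E)).
          { intros sg. unfold unifL. rewrite !Forall_cons_iff.
            destruct Hc as [[-> ->]|[-> ->]]; simpl; split; intros [H1 H2]; auto. }
          destruct (@elim_case n x t E Nx) as [mu [Hm1 Hm2]].
          * eapply Nat.le_trans; [|exact Hn]. apply nodup_le. intros y Hy.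
            destruct Hc as [[-> ->]|[-> ->]]; simpl in *; rewrite !in_app_iff in *; simpl in *; tauto.
          * exact IHN.
          * exists tau. apply Heq; auto.
          * exists mu. split. apply Heq; auto. intros sg Hsg. apply Hm2, Heq; auto. }
    destruct a as [x|f ts]; [apply (Var_case x b); auto|].
    destruct b as [y|g us]; [apply (Var_case y (Fun f ts)); auto|].
    simpl in Hab. injection Hab as <- Hmap.
    assert (L : length ts = length us).
    { rewrite <- (length_map (subst tau) ts), Hmap, length_map; auto. }
    destruct (IHm (sizeE (combine ts us ++ E))) with (E := combine ts us ++ E) as [mu [Hm1 Hm2]].
    + rewrite sizeE_app, combine_size; auto. simpl in Hm. lia.
    + eapply Nat.le_trans; [|exact Hn]. apply nodup_le. intros z Hz.
      rewrite varsE_app, in_app_iff, combine_vars in Hz; auto. simpl. rewrite !in_app_iff. tauto.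
    + lia.
    + exists tau. apply unifL_app. split; auto. apply combine_unif; auto.
    + exists mu. apply unifL_app in Hm1. destruct Hm1 as [Hm1 Hm1']. split.
      * constructor; auto. simpl. f_equal. apply combine_unif; auto.
      * intros sg Hsg. apply Hm2. inversion Hsg as [|? ? H1 H2]; subst. apply unifL_app.
        split; auto. apply combine_unif; auto. simpl in H1. injection H1; auto.
Qed.

Lemma mgu_exists : forall s t sg, unifier sg s t -> exists mu, mgu mu s t.
Proof.
  intros s t sg H. destruct (@unif_main (nv [(s, t)]) (sizeE [(s, t)]) [(s,t)]) as [mu [H1 H2]]; auto.
  exists sg. constructor; auto.
  exists mu. split. inversion H1; auto. intros tau Ht. apply H2. constructor; auto.
Qed.


Lemma subterm_lift : forall f ls a rs q v, subterm_at a q v ->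
  subterm_at (Fun f (ls ++ a :: rs)) (length ls :: q) v.
Proof. intros f ls a rs q v [b [t H]]. exists b. eexists. constructor. eauto. Qed.

Lemma overlap_cases : forall l sg q X Y T, repl (subst sg l) q X Y T ->
  (exists a, subterm_at l q a /\ ~ is_var a) \/
  (exists q1 q2 x, q = q1 ++ q2 /\ subterm_at l q1 (Var x)).
Proof.
  intro l; induction l as [y|f ts IH] using term_ind'; intros sg q X Y T H.
  - right. exists [], q, y. split; auto. apply subterm_refl.
  - destruct q as [|i q].
    + left. exists (Fun f ts). split. apply subterm_refl. intros [z Hz]; discriminate.
    + apply repl_inv_cons in H. destruct H as [f' [ls [a0 [rs [t0 [E [-> [H _]]]]]]]].
      simpl in E. injection E as <- E. apply map_eq_app in E.
      destruct E as [ts1 [ts2 [-> [E1 E2]]]]. apply map_eq_cons in E2.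
      destruct E2 as [l0 [ts3 [-> [E2 E3]]]]. subst.
      rewrite Forall_forall in IH.
      destruct (IH l0 ltac:(apply in_or_app; simpl; auto) sg q X Y t0 H)
        as [[a [Ha Na]]|[q1 [q2 [x [-> Hx]]]]].
      * left. exists a. split; auto. rewrite length_map. apply subterm_lift; auto.
      * right. exists (length (map (subst sg) ts1) :: q1), q2, x. split; auto.
        rewrite length_map. apply subterm_lift; auto.
Qed.

Definition upd (sg : nat -> term) x c : nat -> term :=
  fun y => if Nat.eq_dec y x then c else sg y.

Lemma nodup3 : forall (A0 B0 C0 : list nat) x, NoDup (A0 ++ B0 ++ C0) -> In x B0 ->
  ~ In x A0 /\ ~ In x C0 /\ NoDup B0.
Proof.
  intros A0 B0 C0 x H Hx. apply in_split in Hx. destruct Hx as [B1 [B2 ->]].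
  assert (H' : NoDup ((A0 ++ B1) ++ x :: (B2 ++ C0))) by (rewrite <- !app_assoc; simpl; rewrite <- !app_assoc in H; exact H).
  apply NoDup_remove_2 in H'. rewrite !in_app_iff in H'. split; [|split]; try tauto.
  apply NoDup_app_remove_l in H. apply NoDup_app_remove_r in H. auto.
Qed.

Lemma subterm_var_inv : forall l q x, subterm_at l q (Var x) ->
  (l = Var x /\ q = []) \/
  (exists f ls l0 rs q', l = Fun f (ls ++ l0 :: rs) /\ q = length ls :: q' /\ subterm_at l0 q' (Var x)).
Proof.
  intros l [|i q] x [b [t H]].
  - apply repl_inv_nil in H. destruct H; subst; auto.
  - apply repl_inv_cons in H. destruct H as [f [ls [a0 [rs [t0 [-> [-> [H ->]]]]]]]].
    right. exists f, ls, a0, rs, q. split; auto. split; auto. exists b, t0; auto.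
Qed.

Lemma repl_fun_inv : forall f ls l0 rs sg q X Y T,
  repl (subst sg (Fun f (ls ++ l0 :: rs))) (length ls :: q) X Y T ->
  exists t0, repl (subst sg l0) q X Y t0 /\
    T = Fun f (map (subst sg) ls ++ t0 :: map (subst sg) rs).
Proof.
  intros f ls l0 rs sg q X Y T H. apply repl_inv_cons in H.
  destruct H as [f' [ls' [a0 [rs' [t0 [E [L [H ->]]]]]]]].
  simpl in E. injection E as <- E. rewrite map_app in E. simpl in E.
  destruct (app_cons_len _ _ _ _ _ _ E) as [<- [<- <-]]. rewrite length_map; auto.
  exists t0; auto.
Qed.

Lemma var_ov_linear : forall l sg q1 x c T, NoDup (vars l) -> subterm_at l q1 (Var x) ->
  repl (subst sg l) q1 (sg x) c T -> T = subst (upd sg x c) l.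
Proof.
  intro l; induction l as [y|f ts IH] using term_ind'; intros sg q1 x c T ND Hs H.
  - apply subterm_var_inv in Hs. destruct Hs as [[E ->]|[? [? [? [? [? [E _]]]]]]]; try discriminate.
    injection E as ->. apply repl_inv_nil in H. destruct H as [_ ->]. simpl. unfold upd.
    destruct (Nat.eq_dec x x); congruence.
  - apply subterm_var_inv in Hs. destruct Hs as [[E _]|[f' [ls [l0 [rs [q' [E [-> Hs]]]]]]]]; try discriminate.
    injection E as <- ->. apply repl_fun_inv in H. destruct H as [t0 [H ->]].
    simpl in ND. rewrite map_app, concat_app in ND. simpl in ND.
    pose proof (subterm_vars Hs) as Hx. assert (Ix : In x (vars l0)) by (apply Hx; simpl; auto).
    destruct (nodup3 _ _ _ _ ND Ix) as [N1 [N2 ND0]].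
    rewrite Forall_forall in IH.
    rewrite (IH l0 ltac:(apply in_or_app; simpl; auto) sg q' x c t0 ND0 Hs H).
    simpl. rewrite map_app. simpl. f_equal. f_equal.
    + apply map_ext_in. intros a Ha. apply subst_ext_in. intros y Hy. unfold upd.
      destruct (Nat.eq_dec y x) as [->|]; auto. exfalso; apply N1. apply in_concat.
      exists (vars a). split; auto. apply in_map; auto.
    + f_equal. apply map_ext_in. intros a Ha. apply subst_ext_in. intros y Hy. unfold upd.
      destruct (Nat.eq_dec y x) as [->|]; auto. exfalso; apply N2. apply in_concat.
      exists (vars a). split; auto. apply in_map; auto.
Qed.

Section Rel.
Variable Rel : term -> term -> Prop.
Hypothesis Rrefl : forall a, Rel a a.
Hypothesis Rtrans : forall a b c, Rel a b -> Rel b c -> Rel a c.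
Hypothesis Rmono : forall f ls a b rs, Rel a b -> Rel (Fun f (ls ++ a :: rs)) (Fun f (ls ++ b :: rs)).

Lemma Rel_args : forall f xs ys, Forall2 Rel xs ys -> Rel (Fun f xs) (Fun f ys).
Proof.
  intros f xs ys H.
  assert (G : forall pre, Rel (Fun f (pre ++ xs)) (Fun f (pre ++ ys))).
  { induction H as [|x y xs ys Hxy H IH]; intros pre. apply Rrefl.
    eapply Rtrans. apply Rmono; eauto.
    specialize (IH (pre ++ [y])). rewrite <- !app_assoc in IH. simpl in IH. exact IH. }
  apply (G []).
Qed.

Lemma Rel_subst : forall t (sg sg' : nat -> term), (forall y, Rel (sg y) (sg' y)) ->
  Rel (subst sg t) (subst sg' t).
Proof.
  intro t; induction t as [y|f ts IH] using term_ind'; intros sg sg' H; simpl; auto.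
  apply Rel_args. rewrite Forall_forall in IH. induction ts as [|a ts IHt]; simpl; constructor.
  apply IH; simpl; auto. apply IHt. intros; apply IH; simpl; auto.
Qed.

Lemma var_ov_gen : forall l sg q1 x c T, subterm_at l q1 (Var x) ->
  repl (subst sg l) q1 (sg x) c T -> Rel (sg x) c -> Rel T (subst (upd sg x c) l).
Proof.
  intro l; induction l as [y|f ts IH] using term_ind'; intros sg q1 x c T Hs H Hc.
  - apply subterm_var_inv in Hs. destruct Hs as [[E ->]|[? [? [? [? [? [E _]]]]]]]; try discriminate.
    injection E as ->. apply repl_inv_nil in H. destruct H as [_ ->]. simpl. unfold upd.
    destruct (Nat.eq_dec x x); [apply Rrefl|congruence].
  - apply subterm_var_inv in Hs. destruct Hs as [[E _]|[f' [ls [l0 [rs [q' [E [-> Hs]]]]]]]]; try discriminate.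
    injection E as <- ->. apply repl_fun_inv in H. destruct H as [t0 [H ->]].
    rewrite Forall_forall in IH.
    assert (Hp : forall y, Rel (sg y) (upd sg x c y)).
    { intros y. unfold upd. destruct (Nat.eq_dec y x) as [->|]; auto. }
    assert (Hm : forall L, Forall2 Rel (map (subst sg) L) (map (subst (upd sg x c)) L)).
    { induction L; simpl; constructor; auto. apply Rel_subst; auto. }
    simpl. rewrite map_app. simpl. apply Rel_args. apply Forall2_app; auto.
    constructor; auto. apply (IH l0 ltac:(apply in_or_app; simpl; auto) sg q' x c t0 Hs H Hc).
Qed.
End Rel.

Lemma repl_arg1 : forall f ls a b rs, repl (Fun f (ls ++ a :: rs)) [length ls] a b (Fun f (ls ++ b :: rs)).
Proof. intros. constructor. constructor. Qed.

Lemma rt_mono : forall E f ls a b rs, clos_refl_trans term (step E) a b ->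
  clos_refl_trans term (step E) (Fun f (ls ++ a :: rs)) (Fun f (ls ++ b :: rs)).
Proof. intros. eapply rt_ctx; eauto. apply repl_arg1. Qed.

Lemma rst_mono : forall E f ls a b rs, clos_refl_sym_trans term (step E) a b ->
  clos_refl_sym_trans term (step E) (Fun f (ls ++ a :: rs)) (Fun f (ls ++ b :: rs)).
Proof. intros. eapply rst_ctx; eauto. apply repl_arg1. Qed.

Lemma rt_subst_pt : forall E t (sg sg' : nat -> term),
  (forall y, clos_refl_trans term (step E) (sg y) (sg' y)) ->
  clos_refl_trans term (step E) (subst sg t) (subst sg' t).
Proof.
  intros E t sg sg' H. apply Rel_subst; auto. intros; apply rt_refl. intros; eapply rt_trans; eauto.
  intros; apply rt_mono; auto.
Qed.

Lemma rst_subst_pt : forall E t (sg sg' : nat -> term),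
  (forall y, clos_refl_sym_trans term (step E) (sg y) (sg' y)) ->
  clos_refl_sym_trans term (step E) (subst sg t) (subst sg' t).
Proof.
  intros E t sg sg' H. apply Rel_subst; auto. intros; apply rst_refl. intros; eapply rst_trans; eauto.
  intros; apply rst_mono; auto.
Qed.

Inductive kind := KR | KB.
Definition rulesOf (R B : rules F) k := match k with KR => R | KB => Bpm B end.

Lemma var_overlap_join : forall (R B : rules F), left_linear R ->
  forall ko ki lo ro sg q1 x c T, (ko = KR \/ ki = KR) -> rulesOf R B ko (lo, ro) ->
  subterm_at lo q1 (Var x) -> step (rulesOf R B ki) (sg x) c ->
  repl (subst sg lo) q1 (sg x) c T -> joinable_mod R B T (subst sg ro).
Proof.
  intros R B LL ko ki lo ro sg q1 x c T Hk Ho Hs Hc H.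
  destruct ko; simpl in Ho.
  - rewrite (@var_ov_linear lo sg q1 x c T (LL _ _ Ho) Hs H).
    destruct ki; simpl in Hc.
    + exists (subst (upd sg x c) ro), (subst (upd sg x c) ro). split; [|split].
      * apply rt_step, step_root; auto.
      * apply rst_refl.
      * apply rt_subst_pt. intros y. unfold upd. destruct (Nat.eq_dec y x) as [->|].
        apply rt_step; auto. apply rt_refl.
    + exists (subst (upd sg x c) ro), (subst sg ro). split; [|split].
      * apply rt_step, step_root; auto.
      * apply rst_sym. apply rst_subst_pt. intros y. unfold upd. destruct (Nat.eq_dec y x) as [->|].
        apply Bpm_sim; auto. apply rst_refl.
      * apply rt_refl.
  - destruct Hk as [Hk|Hk]; [discriminate|subst ki]. simpl in Hc.
    exists (subst (upd sg x c) lo), (subst (upd sg x c) ro). split; [|split].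
    + eapply (var_ov_gen (clos_refl_trans term (step R))).
      * intros; apply rt_refl.
      * intros; eapply rt_trans; eauto.
      * intros; apply rt_mono; auto.
      * exact Hs.
      * exact H.
      * apply rt_step; auto.
    + apply Bpm_sim. apply step_root; auto.
    + apply rt_subst_pt. intros y. unfold upd. destruct (Nat.eq_dec y x) as [->|].
      apply rt_step; auto. apply rt_refl.
Qed.


Lemma lt_max : forall (L : list nat) x, In x L -> x < S (fold_right max 0 L).
Proof. induction L as [|y L IH]; simpl; intros x H. destruct H. destruct H as [->|H]. lia. specialize (IH x H). lia. Qed.

Definition swp (N x : nat) : nat := if x <? N then x + N else if x <? N + N then x - N else x.

Lemma swp_inv : forall N x, swp N (swp N x) = x.
Proof.
  intros N x. unfold swp.
  destruct (Nat.ltb_spec x N); [destruct (Nat.ltb_spec (x + N) N); [lia|];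
    destruct (Nat.ltb_spec (x + N) (N + N)); lia|].
  destruct (Nat.ltb_spec x (N + N)).
  - destruct (Nat.ltb_spec (x - N) N); lia.
  - destruct (Nat.ltb_spec x N); [lia|]. destruct (Nat.ltb_spec x (N+N)); lia.
Qed.

Lemma swp_lt : forall N x, x < N -> swp N x = x + N.
Proof. intros N x H. unfold swp. destruct (Nat.ltb_spec x N); lia. Qed.

Lemma swp_renaming : forall N, renaming (swp N).
Proof.
  intros N. split.
  - intros x y H. rewrite <- (swp_inv N x), <- (swp_inv N y), H; auto.
  - intros y. exists (swp N y). apply swp_inv.
Qed.

Lemma id_renaming : renaming (fun x => x).
Proof. split; auto. intros y; exists y; auto. Qed.

Lemma vars_ren : forall (pi : nat -> nat) t y,
  In y (vars (subst (fun x => Var (pi x)) t)) <-> exists x, In x (vars t) /\ y = pi x.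
Proof.
  intros pi t y. rewrite vars_subst. simpl. split.
  intros [x [H [E|[]]]]; eauto. intros [x [H ->]]; eauto.
Qed.

Lemma normal_subst : forall (R : rules F) v th, normal_form R (subst th v) -> normal_form R v.
Proof. intros R v th H [w Hw]. apply H. exists (subst th w). apply step_subst; auto. Qed.

Lemma crit_join : forall (R E1 E2 : rules F) (J : term -> term -> Prop),
  (forall l r, E1 (l,r) -> incl (vars r) (vars l)) ->
  (forall t u, prime_cp R E1 E2 t u -> J t u) ->
  (forall a b th, J a b -> J (subst th a) (subst th b)) -> (forall a, J a a) ->
  forall li ri lo ro sgi sgo q a T,
  E1 (li, ri) -> E2 (lo, ro) ->
  subterm_at lo q a -> ~ is_var a -> subst sgo a = subst sgi li ->
  repl (subst sgo lo) q (subst sgi li) (subst sgi ri) T ->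
  (forall q' v, q' <> [] -> subterm_at (subst sgi li) q' v -> normal_form R v) ->
  J T (subst sgo ro).
Proof.
  intros R E1 E2 J Hv1 HCP Jsub Jrefl li ri lo ro sgi sgo q a T H1 H2 Hs Na Ha HT Hprime.
  set (N := S (fold_right max 0 (rule_vars (li, ri) ++ rule_vars (lo, ro)))).
  assert (HN1 : forall x, In x (rule_vars (li, ri)) -> x < N).
  { intros x Hx. apply lt_max. apply in_or_app; auto. }
  assert (HN2 : forall x, In x (rule_vars (lo, ro)) -> x < N).
  { intros x Hx. apply lt_max. apply in_or_app; auto. }
  set (pi := swp N).
  set (li' := subst (fun x => Var (pi x)) li). set (ri' := subst (fun x => Var (pi x)) ri).
  set (sgi' := fun x => sgi (pi x)).
  assert (Hren : forall t, subst sgi' (subst (fun x => Var (pi x)) t) = subst sgi t).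
  { intros t. rewrite subst_comp. simpl. apply subst_ext_in. intros x _. unfold sgi', pi.
    rewrite swp_inv; auto. }
  set (tau := fun x => if in_dec Nat.eq_dec x (rule_vars (li', ri')) then sgi' x else sgo x).
  assert (Hti : forall t, incl (vars t) (rule_vars (li', ri')) -> subst tau t = subst sgi' t).
  { intros t Ht. apply subst_ext_in. intros x Hx. unfold tau.
    destruct (in_dec Nat.eq_dec x (rule_vars (li', ri'))); auto. exfalso; auto. }
  assert (Hdisj : forall x, In x (rule_vars (li', ri')) -> ~ In x (rule_vars (lo, ro))).
  { intros x Hx Hx'. apply HN2 in Hx'. unfold rule_vars in Hx; simpl in Hx.
    apply in_app_iff in Hx. destruct Hx as [Hx|Hx]; apply vars_ren in Hx;
      destruct Hx as [z [Hz ->]]; unfold pi in Hx'; rewrite swp_lt in Hx'; try lia;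
      apply HN1; unfold rule_vars; simpl; apply in_or_app; auto. }
  assert (Hto : forall t, incl (vars t) (rule_vars (lo, ro)) -> subst tau t = subst sgo t).
  { intros t Ht. apply subst_ext_in. intros x Hx. unfold tau.
    destruct (in_dec Nat.eq_dec x (rule_vars (li', ri'))); auto. exfalso. eapply Hdisj; eauto. }
  assert (Eli : subst tau li' = subst sgi li).
  { rewrite Hti. apply Hren. intros x Hx; unfold rule_vars; simpl; apply in_or_app; auto. }
  assert (Eri : subst tau ri' = subst sgi ri).
  { rewrite Hti. apply Hren. intros x Hx; unfold rule_vars; simpl; apply in_or_app; auto. }
  assert (Iav : incl (vars a) (rule_vars (lo, ro))).
  { intros x Hx. apply (subterm_vars Hs) in Hx. unfold rule_vars; simpl; apply in_or_app; auto. }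
  assert (Elo : subst tau lo = subst sgo lo).
  { apply Hto. intros x Hx; unfold rule_vars; simpl; apply in_or_app; auto. }
  assert (Ero : subst tau ro = subst sgo ro).
  { apply Hto. intros x Hx; unfold rule_vars; simpl; apply in_or_app; auto. }
  assert (Eav : subst tau a = subst sgo a) by (apply Hto; auto).
  assert (Hunif : unifier tau li' a) by (unfold unifier; rewrite Eli, Eav; auto).
  destruct (mgu_exists Hunif) as [mu [Hmu1 Hmu2]].
  destruct (Hmu2 tau Hunif) as [dl Hdl].
  assert (SG : forall t, subst dl (subst mu t) = subst tau t).
  { intros t. rewrite subst_comp. apply subst_ext_in. intros x _. auto. }
  assert (Vincl : incl (vars ri') (vars li')).
  { intros y Hy. apply vars_ren in Hy. destruct Hy as [x [Hx ->]]. apply vars_ren.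
    exists x; split; auto. apply (Hv1 _ _ H1); auto. }
  destruct (classic (q = [] /\ variant (li', ri') (lo, ro))) as [[-> [p2 [_ [E1' E2']]]]|Nv].
  - simpl in E1', E2'. destruct Hs as [b0 [t0 Hs]]. apply repl_inv_nil in Hs. destruct Hs as [<- _].
    apply repl_inv_nil in HT. destruct HT as [_ ->].
    assert (Ag : forall x, In x (vars li') -> tau x = subst tau (Var (p2 x))).
    { apply subst_ext_inv. rewrite <- subst_comp, <- E1'. unfold unifier in Hunif.
      rewrite Hunif; auto. }
    rewrite <- Eri, <- Ero, E2', subst_comp. replace (subst (fun x => subst tau (Var (p2 x))) ri')
      with (subst tau ri'); [apply Jrefl|]. apply subst_ext_in. intros x Hx. apply Ag, Vincl; auto.
  - destruct Hs as [b0 [lo0 Hs0]].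
    pose proof (repl_subst Hs0 mu) as Hs1.
    unfold unifier in Hmu1. rewrite <- Hmu1 in Hs1.
    destruct (repl_exists Hs1 (subst mu ri')) as [t0 Ht0].
    assert (HJ : J t0 (subst mu ro)).
    { apply HCP. exists li', ri', lo, ro, q, a, mu, (subst mu lo).
      split; [|split; [|split; [|split; [|split; [|split; [|split; [|split; [|split; [|split]]]]]]]]].
      - exists (li, ri). split; auto. exists pi. split; auto. apply swp_renaming.
      - exists (lo, ro). split; auto. exists (fun x => x). split. apply id_renaming.
        simpl. rewrite !subst_Var. auto.
      - exact Hdisj.
      - exists b0, lo0; auto.
      - exact Na.
      - exact Nv.
      - split; auto.
      - auto.
      - exact Ht0.
      - auto.
      - intros q' v Nq Hv [w Hw]. apply (subterm_subst dl) in Hv. rewrite SG, Eli in Hv.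
        apply (Hprime q' _ Nq Hv). exists (subst dl w). apply step_subst; auto. }
    apply (Jsub _ _ dl) in HJ. rewrite SG, Ero in HJ.
    pose proof (repl_subst Ht0 dl) as Ht1. rewrite !SG, Elo, Eli, Eri in Ht1.
    destruct (repl_det HT Ht1) as [_ E]. rewrite E; auto.
Qed.


Section Local.
Variables R B : rules F.
Notation j := (joinable_mod R B).
Hypothesis HvR : forall l r, R (l, r) -> incl (vars r) (vars l).
Hypothesis HvB : forall l r, Bpm B (l, r) -> incl (vars r) (vars l).
Hypothesis LLR : left_linear R.
Hypothesis HCP : forall ki ko, (ko = KR \/ ki = KR) ->
  forall t u, prime_cp R (rulesOf R B ki) (rulesOf R B ko) t u -> j t u.
Variable s : term.
Hypothesis Comb : forall s' t u, step R s s' -> j t s' -> j s' u -> j t u.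

Definition redex k a b := exists l r sg, rulesOf R B k (l, r) /\ a = subst sg l /\ b = subst sg r.

Lemma redex_step : forall k a b s0 p t, redex k a b -> repl s0 p a b t -> step (rulesOf R B k) s0 t.
Proof. intros k a b s0 p t [l [r [sg [H [-> ->]]]]] Hr. exists l, r, p, sg; auto. Qed.

Lemma Hv : forall k l r, rulesOf R B k (l, r) -> incl (vars r) (vars l).
Proof. intros [|] l r H; simpl in H; eauto. Qed.

Lemma par_join : forall k1 k2 t u w, (k1 = KR \/ k2 = KR) ->
  step (rulesOf R B k2) t w -> step (rulesOf R B k1) u w -> j t u.
Proof.
  intros [|] [|] t u w Hk H1 H2; simpl in *.
  - exists w, w. split; [|split]; [apply rt_step; auto|apply rst_refl|apply rt_step; auto].
  - exists t, w. split; [|split]; [apply rt_refl|apply Bpm_sim; auto|apply rt_step; auto].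
  - exists w, u. split; [|split]; [apply rt_step; auto|apply rst_sym, Bpm_sim; auto|apply rt_refl].
  - destruct Hk; discriminate.
Qed.

Definition LLstmt m := forall k1 k2 P Q a1 b1 a2 b2 t u, size a1 + size a2 < m ->
  (k1 = KR \/ k2 = KR) -> redex k1 a1 b1 -> repl s P a1 b1 t ->
  redex k2 a2 b2 -> repl s Q a2 b2 u -> j t u.

Lemma over : forall m, LLstmt m -> forall ko ki P q ao bo ai bi to ti,
  size ao + size ai < S m -> (ko = KR \/ ki = KR) ->
  redex ko ao bo -> repl s P ao bo to -> redex ki ai bi -> repl s (P ++ q) ai bi ti -> j to ti.
Proof.
  intros m IH ko ki P q ao bo ai bi to ti Hm Hk Ho Hto Hi Hti.
  destruct (repl_app_inv _ _ Hti) as [A [Bx [HA HB]]].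
  destruct (repl_det HA Hto) as [-> _].
  assert (Jlift : j Bx bo -> j to ti).
  { intros HJ. apply j_sym. eapply j_ctx; eauto. eapply repl_trans; eauto. }
  destruct Ho as [lo [ro [sgo [Hro [-> ->]]]]].
  destruct (overlap_cases _ _ HB) as [[a [Ha Na]]|[q1 [q2 [x [-> Hx]]]]].
  - destruct Hi as [li [ri [sgi [Hri [Eai Ebi]]]]].
    assert (Eav : subst sgo a = ai).
    { destruct Ha as [b0 [lo0 Ha]]. destruct (repl_det (repl_subst Ha sgo) HB) as [E _]; auto. }
    destruct (classic (forall q' v, q' <> [] -> subterm_at ai q' v -> normal_form R v)) as [Hp|Hp].
    + apply Jlift. subst ai bi.
      eapply (@crit_join R (rulesOf R B ki) (rulesOf R B ko) j); eauto.
      * intros; eapply Hv; eauto.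
      * intros; apply j_subst; auto.
      * intros; apply j_refl.
    + apply not_all_ex_not in Hp. destruct Hp as [q' Hp]. apply not_all_ex_not in Hp.
      destruct Hp as [v Hp]. apply imply_to_and in Hp. destruct Hp as [Nq Hp].
      apply imply_to_and in Hp. destruct Hp as [Hv' Hp]. apply NNPP in Hp.
      destruct Hp as [w [l3 [r3 [p3 [sg3 [H3 Hr3]]]]]].
      destruct Hv' as [X [Y Hv']]. destruct (repl_exists Hv' w) as [ai' Hai'].
      pose proof (repl_app Hai' Hr3) as Hai3.
      destruct (repl_exists Hti ai') as [s' Hs'].
      pose proof (repl_app Hs' Hai3) as Hs3.
      assert (Sz1 : size (subst sg3 l3) < size ai).
      { apply (subterm_size_lt (q := q' ++ p3)). do 2 eexists; eauto. destruct q'; simpl; congruence. }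
      assert (Sz2 : size ai <= size (subst sgo lo)).
      { apply (subterm_size (q := q)). do 2 eexists; eauto. }
      assert (R3 : redex KR (subst sg3 l3) (subst sg3 r3)) by (exists l3, r3, sg3; auto).
      apply Comb with s'.
      * exact (redex_step R3 Hs3).
      * apply (IH ko KR P ((P ++ q) ++ q' ++ p3) (subst sgo lo) (subst sgo ro) (subst sg3 l3) (subst sg3 r3) to s'); auto. lia.
        exists lo, ro, sgo; auto.
      * apply j_sym. apply (IH ki KR (P ++ q) ((P ++ q) ++ q' ++ p3) ai bi (subst sg3 l3) (subst sg3 r3) ti s'); auto. lia.
        exists li, ri, sgi; auto.
  - apply Jlift.
    destruct (repl_app_inv _ _ HB) as [C [D [HC HD]]].
    assert (EC : C = sgo x).
    { destruct Hx as [b0 [lo0 Hx]]. destruct (repl_det HC (repl_subst Hx sgo)) as [E _]; auto. }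
    subst C. apply (@var_overlap_join R B LLR ko ki lo ro sgo q1 x D Bx Hk Hro Hx); auto.
    eapply redex_step; eauto.
Qed.

Lemma local_main : forall m, LLstmt m.
Proof.
  induction m as [|m IH]; intros k1 k2 P Q a1 b1 a2 b2 t u Hm Hk H1 Hr1 H2 Hr2. lia.
  destruct (positions Hr1 Hr2) as [[q ->]|[[q ->]|[w [W1 W2]]]].
  - apply (@over m IH k1 k2 P q a1 b1 a2 b2 t u); auto.
  - apply j_sym. apply (@over m IH k2 k1 Q q a2 b2 a1 b1 u t); auto. lia. tauto.
  - eapply par_join; eauto; eapply redex_step; eauto.
Qed.

Lemma local_conf : forall t u, step R s t -> step R s u -> j t u.
Proof.
  intros t u [l1 [r1 [p1 [sg1 [H1 Hr1]]]]] [l2 [r2 [p2 [sg2 [H2 Hr2]]]]].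
  apply (@local_main (S (size (subst sg1 l1) + size (subst sg2 l2))) KR KR p1 p2
    (subst sg1 l1) (subst sg1 r1) (subst sg2 l2) (subst sg2 r2)); auto.
  exists l1, r1, sg1; auto. exists l2, r2, sg2; auto.
Qed.

Lemma local_coh : forall t u, step R s t -> step (Bpm B) s u -> j t u.
Proof.
  intros t u [l1 [r1 [p1 [sg1 [H1 Hr1]]]]] [l2 [r2 [p2 [sg2 [H2 Hr2]]]]].
  apply (@local_main (S (size (subst sg1 l1) + size (subst sg2 l2))) KR KB p1 p2
    (subst sg1 l1) (subst sg1 r1) (subst sg2 l2) (subst sg2 r2)); auto.
  exists l1, r1, sg1; auto. exists l2, r2, sg2; auto.
Qed.

End Local.


Section Global.
Variables R B : rules F.
Notation j := (joinable_mod R B).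
Notation rt := (clos_refl_trans term (step R)).
Notation sim := (simB B).
Notation SM := (step_mod R B).
Hypothesis HvR : forall l r, R (l, r) -> incl (vars r) (vars l).
Hypothesis HvB : forall l r, Bpm B (l, r) -> incl (vars r) (vars l).
Hypothesis LLR : left_linear R.
Hypothesis HCP : forall ki ko, (ko = KR \/ ki = KR) ->
  forall t u, prime_cp R (rulesOf R B ki) (rulesOf R B ko) t u -> j t u.
Hypothesis TERM : terminating_modulo R B.

Definition T1 (a b : term) := SM b a.
Definition ltm := clos_trans term T1.

Lemma wf_T1 : well_founded T1.
Proof.
  intro x. apply NNPP. intro Hx.
  assert (step_ex : forall y : {y | ~ Acc T1 y}, {z : {z | ~ Acc T1 z} | SM (proj1_sig y) (proj1_sig z)}).
  { intros [y Hy]. apply constructive_indefinite_description.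
    destruct (classic (exists z, SM y z /\ ~ Acc T1 z)) as [[z [H1 H2]]|N].
    - exists (exist _ z H2); auto.
    - exfalso; apply Hy; constructor; intros z Hz; apply NNPP; intro Nz; apply N; eauto. }
  apply TERM. exists (fun n => proj1_sig (Nat.iter n (fun y => proj1_sig (step_ex y)) (exist _ x Hx))).
  intros n. simpl. exact (proj2_sig (step_ex _)).
Qed.

Lemma wf_ltm : well_founded ltm.
Proof. apply wf_clos_trans, wf_T1. Qed.

Lemma step_SM : forall x y, step R x y -> SM x y.
Proof. intros x y H. exists x, y. split; [apply rst_refl|split; auto; apply rst_refl]. Qed.

Lemma SM_sim : forall x c y, sim x c -> SM c y -> SM x y.
Proof.
  intros x c y H [c' [y' [H1 [H2 H3]]]]. exists c', y'. split; auto. eapply rst_trans; eauto.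
Qed.

Lemma ltm_sim : forall w c, ltm w c -> forall x, sim x c -> ltm w x.
Proof.
  intros w c H; induction H as [w c H|w y c H1 IH1 H2 IH2]; intros x Hx.
  - apply t_step. unfold T1 in *. eapply SM_sim; eauto.
  - eapply t_trans; eauto. apply IH2; auto.
Qed.

Lemma ltm_rt : forall x s, ltm x s -> forall y, rt x y -> ltm y s.
Proof.
  intros x s H y Hy. apply clos_rt_rt1n in Hy. induction Hy; auto.
  apply IHHy. eapply t_trans; [|exact H]. apply t_step. apply step_SM; auto.
Qed.

Lemma step_ltm : forall x y, step R x y -> ltm y x.
Proof. intros. apply t_step. apply step_SM; auto. Qed.

Lemma nf_exists : forall x, exists n, rt x n /\ normal_form R n.
Proof.
  intro x; induction x as [x IH] using (well_founded_induction wf_ltm).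
  destruct (classic (normal_form R x)) as [H|H]. exists x; split; auto. apply rt_refl.
  apply NNPP in H. destruct H as [y Hy]. destruct (IH y (step_ltm Hy)) as [n [H1 H2]].
  exists n; split; auto. eapply rt_trans; eauto. apply rt_step; auto.
Qed.

Lemma rt_nf : forall n m, normal_form R n -> rt n m -> m = n.
Proof.
  intros n m Hn H. apply clos_rt_rt1n in H. destruct H; auto. exfalso; apply Hn; eauto.
Qed.

Definition Ndef x := forall x' n n', sim x x' -> rt x n -> normal_form R n ->
  rt x' n' -> normal_form R n' -> sim n n'.

Lemma comb_gen : forall x, (forall w, ltm w x -> Ndef w) ->
  forall s' t u, ltm s' x -> j t s' -> j s' u -> j t u.
Proof.
  intros x IH s' t u Hs [a [b [H1 [H2 H3]]]] [c [d [H4 [H5 H6]]]].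
  destruct (nf_exists a) as [na [Ha Na]]. destruct (nf_exists b) as [nb [Hb Nb]].
  destruct (nf_exists c) as [nc [Hc Nc]]. destruct (nf_exists d) as [nd [Hd Nd]].
  assert (E1 : sim nb na) by (apply (IH b (ltm_rt Hs H3) a); auto; apply rst_sym; auto).
  assert (E2 : sim nb nc).
  { apply (IH s' Hs s'); auto. apply rst_refl. exact (rt_trans _ _ _ _ _ H3 Hb). exact (rt_trans _ _ _ _ _ H4 Hc). }
  assert (E3 : sim nc nd) by (apply (IH c (ltm_rt Hs H4) d); auto).
  exists na, nd. split; [|split].
  - eapply rt_trans; eauto.
  - eapply rst_trans. apply rst_sym; eauto. eapply rst_trans; eauto.
  - eapply rt_trans; eauto.
Qed.

Lemma local_at : forall x, (forall w, ltm w x -> Ndef w) -> forall c, sim x c ->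
  (forall t u, step R c t -> step R c u -> j t u) /\
  (forall t u, step R c t -> step (Bpm B) c u -> j t u).
Proof.
  intros x IH c Hc.
  assert (Comb : forall s' t u, step R c s' -> j t s' -> j s' u -> j t u).
  { intros s' t u H. apply (comb_gen IH). apply t_step. unfold T1. eapply SM_sim; eauto.
    apply step_SM; auto. }
  split; intros t u; [apply (local_conf HvR HvB LLR HCP Comb)|apply (local_coh HvR HvB LLR HCP Comb)].
Qed.

Lemma bpm_of : forall c c2, step B c c2 \/ step B c2 c -> step (Bpm B) c c2.
Proof.
  intros c c2 [[l [r [p [sg [H Hr]]]]]|[l [r [p [sg [H Hr]]]]]].
  - exists l, r, p, sg. split; auto. left; auto.
  - exists r, l, p, sg. split. right; auto. apply repl_sym; auto.
Qed.

Lemma half : forall x, (forall w, ltm w x -> Ndef w) ->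
  forall x1 n, step R x x1 -> rt x1 n -> normal_form R n ->
  forall c m, sim x c -> rt c m -> normal_form R m -> sim m n.
Proof.
  intros x IH x1 n Hx1 Hn Nn c m Hc.
  assert (LA := local_at IH).
  assert (lt_of : forall c z y, sim x c -> step R c z -> rt z y -> ltm y x).
  { intros c0 z y H0 Hz Hy. eapply ltm_rt; eauto. apply t_step. unfold T1. eapply SM_sim; eauto.
    apply step_SM; auto. }
  apply clos_rst_rstn1 in Hc. revert m.
  induction Hc as [|c c2 Hcc Hc IHc]; intros m Hm Nm.
  - apply clos_rt_rt1n in Hm. destruct Hm as [|z m Hz Hm].
    + exfalso; apply Nm; eauto.
    + apply clos_rt1n_rt in Hm.
      destruct (proj1 (LA x (rst_refl _ _ _)) x1 z Hx1 Hz) as [a [b [H1 [H2 H3]]]].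
      destruct (nf_exists a) as [na [Ha Na]]. destruct (nf_exists b) as [nb [Hb Nb]].
      assert (E1 : sim n na) by (apply (IH x1 (step_ltm Hx1) x1); auto; [apply rst_refl|eapply rt_trans; eauto]).
      assert (E2 : sim na nb) by (apply (IH a (lt_of x x1 a (rst_refl _ _ _) Hx1 H1) b); auto).
      assert (E3 : sim nb m) by (apply (IH z (lt_of x z z (rst_refl _ _ _) Hz (rt_refl _ _ _)) z); auto;
                                 [apply rst_refl|eapply rt_trans; eauto]).
      apply rst_sym. eapply rst_trans; eauto. eapply rst_trans; eauto.
  - apply clos_rstn1_rst in Hc.
    assert (Hc2 : sim x c2). { eapply rst_trans; eauto. apply Bpm_sim, bpm_of; auto. }
    apply clos_rt_rt1n in Hm. destruct Hm as [|z m Hz Hm].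
    + destruct (classic (normal_form R c)) as [Nc|Nc].
      * apply rst_sym in Hc. eapply rst_trans. apply rst_sym, Bpm_sim, bpm_of; eauto.
        apply IHc; auto. apply rt_refl.
      * apply NNPP in Nc. destruct Nc as [z Hz].
        destruct (proj2 (LA c Hc) z c2 Hz (bpm_of Hcc)) as [a [b [H1 [H2 H3]]]].
        rewrite (rt_nf Nm H3) in H2.
        destruct (nf_exists a) as [na [Ha Na]].
        assert (E1 : sim na c2) by (apply (IH a (lt_of c z a Hc Hz H1) c2); auto; apply rt_refl).
        assert (E2 : sim na n) by (apply IHc; auto; eapply rt_trans; [apply rt_step; eauto|eapply rt_trans; eauto]).
        eapply rst_trans; [apply rst_sym; eauto|auto].
    + apply clos_rt1n_rt in Hm.
      assert (Hcc' : step B c2 c \/ step B c c2) by tauto.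
      destruct (proj2 (LA c2 Hc2) z c Hz (bpm_of Hcc')) as [a [b [H1 [H2 H3]]]].
      destruct (nf_exists a) as [na [Ha Na]]. destruct (nf_exists b) as [nb [Hb Nb]].
      assert (E1 : sim nb n) by (apply IHc; auto; eapply rt_trans; eauto).
      assert (E2 : sim na nb) by (apply (IH a (lt_of c2 z a Hc2 Hz H1) b); auto).
      assert (E3 : sim m na) by (apply (IH z (lt_of c2 z z Hc2 Hz (rt_refl _ _ _)) z); auto;
                                 [apply rst_refl|eapply rt_trans; eauto]).
      eapply rst_trans; eauto. eapply rst_trans; eauto.
Qed.

Lemma all_N : forall x, Ndef x.
Proof.
  intro x; induction x as [x IH] using (well_founded_induction wf_ltm).
  intros x' n n' Hx Hn Nn Hn' Nn'.
  apply clos_rt_rt1n in Hn. destruct Hn as [|x1 n Hx1 Hn].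
  - apply clos_rt_rt1n in Hn'. destruct Hn' as [|x1' n' Hx1' Hn']; auto.
    apply clos_rt1n_rt in Hn'.
    assert (IH' : forall w, ltm w x' -> Ndef w) by (intros w Hw; apply IH; eapply ltm_sim; eauto).
    apply (@half x' IH' x1' n' Hx1' Hn' Nn' x x); auto.
    + apply rst_sym; auto.
    + apply rt_refl.
  - apply clos_rt1n_rt in Hn. apply rst_sym. apply (@half x IH x1 n Hx1 Hn Nn x' n'); auto.
Qed.

Theorem CR_of_local : CR_modulo R B.
Proof.
  intros s t H.
  assert (G : forall ns nt, rt s ns -> normal_form R ns -> rt t nt -> normal_form R nt -> sim ns nt).
  { induction H as [s t H|s|s t H IH|s y t H1 IH1 H2 IH2]; intros ns nt Hs Ns Ht Nt.
    - destruct H as [l [r [p [sg [[HR|HB] Hr]]]]].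
      + assert (Hst : step R s t) by (exists l, r, p, sg; split; auto).
        exact (@all_N s s ns nt (rst_refl _ _ s) Hs Ns (rt_trans _ _ _ _ _ (rt_step _ _ _ _ Hst) Ht) Nt).
      + assert (Hst : step B s t) by (exists l, r, p, sg; split; auto).
        exact (@all_N s t ns nt (rst_step _ _ _ _ Hst) Hs Ns Ht Nt).
    - exact (@all_N s s ns nt (rst_refl _ _ s) Hs Ns Ht Nt).
    - apply rst_sym; apply IH; auto.
    - destruct (nf_exists y) as [ny [Hy Ny]]. apply rst_trans with ny; [apply IH1|apply IH2]; auto. }
  destruct (nf_exists s) as [ns [Hs Ns]]. destruct (nf_exists t) as [nt [Ht Nt]].
  exists ns, nt. split; [|split]; auto.
Qed.

End Global.

End Main.

Lemma rst_incl : forall (F : Type) (S1 S2 : relation (term F)), (forall a b, S1 a b -> S2 a b) ->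
  forall a b, clos_refl_sym_trans _ S1 a b -> clos_refl_sym_trans _ S2 a b.
Proof.
  intros F S1 S2 H a b Hab; induction Hab.
  apply rst_step; auto. apply rst_refl. apply rst_sym; auto. eapply rst_trans; eauto.
Qed.

Lemma cp_conv : forall (F : Type) (R B R1 R2 : rules F),
  (forall a b, step R1 a b -> clos_refl_sym_trans _ (step (Defs.union R B)) a b) ->
  (forall a b, step R2 a b -> clos_refl_sym_trans _ (step (Defs.union R B)) a b) ->
  forall t u, prime_cp R R1 R2 t u -> clos_refl_sym_trans _ (step (Defs.union R B)) t u.
Proof.
  intros F R B R1 R2 H1 H2 t u Hc.
  destruct Hc as [l1 [r1 [l2 [r2 [p [a [sg [s Hc]]]]]]]].
  destruct Hc as [V1 [V2 [_ [_ [_ [_ [_ [Es [Hr [Eu _]]]]]]]]]]. subst s u.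
  apply rst_trans with (subst sg l2).
  - apply rst_sym. apply H1. eapply step_variant; eauto.
  - apply H2. eapply step_variant; eauto. constructor.
Qed.

Theorem theorem3p16 (F : Type) (R B : rules F) :
  B_ok B -> is_TRS R -> left_linear R -> terminating_modulo R B ->
  (CR_modulo R B <->
   (forall t u : term F, PCP R t u \/ PCPpm R B t u -> joinable_mod R B t u)).
Proof.
  intros HB HR LL TM.
  assert (SR : forall a b, step R a b -> clos_refl_sym_trans _ (step (Defs.union R B)) a b).
  { intros a b [l [r [p [sg [H Hr]]]]]. apply rst_step. exists l, r, p, sg. split; auto. left; auto. }
  assert (SB : forall a b, step (Bpm B) a b -> clos_refl_sym_trans _ (step (Defs.union R B)) a b).
  { intros a b H. apply Bpm_sim in H. revert H. apply rst_incl.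
    intros x y [l [r [p [sg [H Hr]]]]]. exists l, r, p, sg. split; auto. right; auto. }
  split.
  - intros CR t u [H|[H|H]]; apply CR.
    + exact (@cp_conv F R B R R SR SR t u H).
    + exact (@cp_conv F R B R (Bpm B) SR SB t u H).
    + exact (@cp_conv F R B (Bpm B) R SB SR t u H).
  - intros H. apply (@CR_of_local F R B).
    + intros l r Hlr. apply (HR l r Hlr).
    + intros l r [Hlr|Hlr]. apply (HB l r Hlr). apply (HB r l Hlr).
    + exact LL.
    + intros [|] [|] Hk t u Hc; simpl in Hc; apply H.
      * left; exact Hc.
      * right; left; exact Hc.
      * right; right; exact Hc.
      * destruct Hk; discriminate.
    + exact TM.
Qed.
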